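(* Let $K$ and $L$ be finite simplicial complexes. If $K$ and $L$ have the same simple homotopy type, then $\overline{\mathrm{rank}}(K)=\overline{\mathrm{rank}}(L)$, where $\overline{\mathrm{rank}}(K):=|\mathcal{X}(K)|-\mathrm{rank}(\mathcal{X}(K)_M)$.
   Context: $\mathcal{X}(K)$ is the face poset of $K$ (simplices ordered by inclusion). For a finite poset $X=\{x_1,\dots,x_n\}$ (with a labelling), $X_M=(x_{i,j})$ is the $n\times n$ matrix with $x_{i,j}=0$ if $x_i\le x_j$ and $x_{i,j}=1$ otherwise. Simple homotopy type of simplicial complexes is in the classical sense of Whitehead. *)

(* Defs.v *)
From HB Require Import structures.
From mathcomp Require Import all_boot all_order all_algebra.
From mathcomp Require Import finmap.
From Stdlib Require Import Relations.
Set Implicit Arguments. Unset Strict Implicit. Unset Printing Implicit Defensive.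
Import GRing.Theory.
Local Open Scope fset_scope.

Definition simplicial_complex (K : {fset {fset nat}}) : Prop :=
  forall s, s \in K -> s != fset0 /\
    (forall t : {fset nat}, t `<=` s -> t != fset0 -> t \in K).

Definition elem_collapse (K K' : {fset {fset nat}}) : Prop :=
  simplicial_complex K /\
  exists s t : {fset nat},
    [/\ s \in K, t \in K, t `<` s, #|` s| = (#|` t|).+1 &
        (forall u, u \in K -> t `<` u -> u = s)] /\
    K' = K `\` [fset s; t].

Definition simp_iso (K L : {fset {fset nat}}) : Prop :=
  exists f : nat -> nat, injective f /\
    L = [fset [fset f v | v in (s : {fset nat})] | s in K].

(* Same simple homotopy type (Whitehead): related by a finite sequence of
   elementary collapses and expansions, up to simplicial isomorphism. *)
Definition same_simple_homotopy_type (K L : {fset {fset nat}}) : Prop :=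
  exists K', clos_refl_sym_trans _ elem_collapse K K' /\ simp_iso K' L.

Definition face_poset_matrix (K : {fset {fset nat}}) :
    'M[rat]_(size (enum_fset K)) :=
  \matrix_(i < size (enum_fset K), j < size (enum_fset K))
    ((if nth fset0 (enum_fset K) i `<=` nth fset0 (enum_fset K) j
     then 0%R else 1%R) : rat).

Definition rankbar (K : {fset {fset nat}}) : nat :=
  #|` K| - \rank (face_poset_matrix K).

(* Main.v *)
Require Import Defs.
From mathcomp Require Import all_boot all_order all_algebra.
From mathcomp Require Import finmap.
From Stdlib Require Import Relations.
From mathcomp Require Import zify.
Set Implicit Arguments. Unset Strict Implicit. Unset Printing Implicit Defensive.
Import GRing.Theory.
Local Open Scope fset_scope.
Local Open Scope ring_scope.

Definition sgn (x : {fset nat}) : rat := (-1) ^+ #|` x|.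

Lemma alt_eq (x : {fset nat}) :
  \sum_(z <- fpowerset x | x `<=` z) sgn z = sgn x.
Proof.
rewrite (@eq_fbigl_cond _ _ _ _ _ [fset x] _ predT).
  by rewrite big_seq_fset1.
move=> z; rewrite !inE /= fpowersetE andbT.
by rewrite eqEfsubset andbC.
Qed.

Lemma alt_sum n (x y : {fset nat}) : (#|` y `\` x| <= n)%N -> x `<=` y ->
  \sum_(z <- fpowerset y | x `<=` z) sgn z = if x == y then sgn x else 0.
Proof.
elim: n x y => [|n IH] x y Hn Hxy;
  (case: (boolP (x == y)) => [/eqP Exy|Nxy]; first by subst y; exact: alt_eq).
  have Eyx : y `\` x = fset0 by apply/eqP; rewrite -cardfs_eq0 -leqn0.
  case/negP: Nxy.
  by rewrite eqEfsubset Hxy /= -fsetD_eq0 Eyx.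
have [a Ha] : exists a, a \in y `\` x.
  have : y `\` x != fset0.
    by rewrite fsetD_eq0; apply: contra Nxy => Hyx; rewrite eqEfsubset Hxy Hyx.
  by case/fset0Pn => a Ha; exists a.
move: (Ha); rewrite inE => /andP [anx ay].
rewrite (@big_fsetIDcond _ _ _ _ (fun z : {fset nat} => a \in z)).
rewrite (@eq_fbigl_cond _ _ _ _ _ (fpowerset y) _ (fun z : {fset nat} => (a |` x) `<=` z)); last first.
  move=> z; rewrite !inE /= fpowersetE fsubUset fsub1set.
  by case: (a \in z); rewrite ?andbF ?andbT.
rewrite (@eq_fbigl_cond _ _ _ _ [fset z in fpowerset y | ~~ (a \in z)] (fpowerset (y `\ a)) _ (fun z : {fset nat} => x `<=` z)); last first.
  move=> z; rewrite !inE /= !fpowersetE.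
  apply/idP/idP.
    case/andP => /andP [zy naz] xz; rewrite xz andbT.
    by apply/fsubsetP => b bz; rewrite !inE (fsubsetP zy) // andbT; by apply/eqP => ba; move: naz; rewrite -ba bz.

  case/andP => zy xz; rewrite xz andbT.
  have zy' : z `<=` y by apply: fsubset_trans zy (fsubsetDl _ _).
  rewrite zy' /=; apply/negP => az; move: (fsubsetP zy a az); by rewrite !inE eqxx.
have Hc : forall A B : {fset nat}, A `<=` B -> #|` B `\` A| = (#|` B| - #|` A|)%N.
  by move=> A B AB; rewrite cardfsD (fsetIidPr AB).
have xsub : x `<=` y `\ a.
  by apply/fsubsetP => b bx; rewrite !inE (fsubsetP Hxy) // andbT; by apply/eqP => ba; move: anx; rewrite -ba bx.
have axy : a |` x `<=` y by rewrite fsubUset fsub1set ay Hxy.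
rewrite Hc // in Hn.
have Hy : #|` y| = (#|` y `\ a|).+1 by rewrite (cardfsD1 a y) ay.
have Hax : #|` a |` x| = (#|` x|).+1 by rewrite cardfsU1 anx.
rewrite (IH x (y `\ a)) //; last by rewrite Hc //; rewrite Hy in Hn; lia.
rewrite (IH (a |` x) y) //; last by rewrite Hc // Hax; lia.
have E : (a |` x == y) = (x == y `\ a).
  apply/eqP/eqP => [<-|->]; first by rewrite fsetU1K.
  by rewrite fsetD1K.
rewrite E; case: (x == y `\ a).
  change (sgn (a |` x) + sgn x = 0).
  by rewrite /sgn Hax exprS mulN1r addNr.
by rewrite Monoid.mulm1.
Qed.

Lemma rank_rank1 (F : fieldType) (n : nat) (u : 'cV[F]_n) (v : 'rV[F]_n) :
  \rank (u *m v - 1%:M) = (n - ((v *m u) ord0 ord0 == 1%R))%N.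
Proof.
set l := (v *m u) ord0 ord0.
have vu : v *m u = l%:M.
  by apply/matrixP => i j; rewrite !ord1 [in RHS]mxE eqxx mulr1n.
set W := u *m v.
have WW : W *m W = l *: W by rewrite /W mulmxA -(mulmxA u) vu mul_mx_scalar scalemxAl.
case: (boolP (l == 1)) => [/eqP l1|ln1] /=.
  have up : (\rank (W - 1%:M)%R < n)%N.
    rewrite ltn_neqAle rank_leq_row andbT; apply/negP => /eqP Hr.
    have Hu : (W - 1%:M) \in unitmx by rewrite -row_free_unit /row_free Hr.
    have vN : v *m (W - 1%:M) = 0.
      by rewrite mulmxBr mulmx1 /W mulmxA vu l1 mul1mx subrr.
    have v0 : v = 0.
      by rewrite -[v]mulmx1 -(mulmxV Hu) mulmxA vN mul0mx.
    by move: l1; rewrite /l v0 mul0mx mxE => /eqP; rewrite eq_sym oner_eq0.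
  have lo : (n <= \rank (W - 1%:M)%R + 1)%N.
    have E : (1%:M : 'M[F]_n) = W + - (W - 1%:M) by rewrite opprB addrC subrK.
    have := mxrank_add W (- (W - 1%:M)); rewrite -E mxrank1 mxrank_opp.
    move=> H; apply: (leq_trans H); rewrite addnC leq_add2l.
    exact: leq_trans (mxrankM_maxl _ _) (rank_leq_col u).
  lia.
rewrite subn0; apply: mxrank_unit.
have l1 : l - 1 != 0 by rewrite subr_eq0.
set a := (l - 1)^-1.
have H : (W - 1%:M) *m (a *: W - 1%:M) = 1%:M.
  rewrite mulmxBl !mulmxBr mulmx1 mul1mx -scalemxAr WW scalerA mul1mx.
  have -> : a * l = a + 1.
    by rewrite /a -[l in _ * l](subrK 1) mulrDr mulVf // mulr1 addrC.
  by rewrite scalerDl scale1r addrK opprB addrC subrK.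
by case: (mulmx1_unit H).
Qed.

Definition chi (K : {fset {fset nat}}) : rat := \sum_(x <- K) - sgn x.

Lemma sub_sum (K : {fset {fset nat}}) : simplicial_complex K ->
  forall y, y \in K -> \sum_(x <- K | x `<=` y) - sgn x = 1.
Proof.
move=> HK y yK; have [yn0 yc] := HK y yK.
have A := @alt_sum _ fset0 y (leqnn _) (fsub0set _).
rewrite eq_sym (negbTE yn0) in A.
rewrite (eq_bigl (fun _ => true)) in A; last by move=> z; rewrite fsub0set.
rewrite (big_fsetD1 fset0) in A; last by rewrite fpowersetE fsub0set.
rewrite sumrN (@eq_fbigl_cond _ _ _ _ _ (fpowerset y `\ fset0) _ (fun _ => true)).
  have A' : sgn fset0 + \sum_(i <- fpowerset y `\ fset0) sgn i = 0 := A.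
  move/eqP: A'; rewrite addrC addr_eq0 => /eqP ->.
  by rewrite /sgn cardfs0 expr0 opprK.
move=> z; rewrite !inE /= fpowersetE andbT.
apply/idP/idP.
  by case/andP => zK zy; rewrite zy andbT; case: (HK z zK).
by case/andP => zn0 zy; rewrite zy andbT; apply: yc.
Qed.

Section Mat.
Variable K : {fset {fset nat}}.
Hypothesis HK : simplicial_complex K.
Local Notation n := (size (enum_fset K)).
Definition X (i : 'I_n) := nth fset0 (enum_fset K) i.

Lemma XK i : X i \in K.
Proof. exact: mem_nth. Qed.

Lemma X_inj : injective X.
Proof.
move=> i j /eqP; rewrite /X nth_uniq ?fset_uniq // => /eqP H; exact: val_inj.
Qed.

Lemma sumX (P : pred {fset nat}) (G : {fset nat} -> rat) :
  \sum_(i < n | P (X i)) G (X i) = \sum_(x <- K | P x) G x.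
Proof. by rewrite (big_nth fset0) big_mkord. Qed.

Definition Zm : 'M[rat]_n := \matrix_(i, j) (if X i `<=` X j then 1 else 0).
Definition Mu : 'M[rat]_n :=
  \matrix_(i, j) (if X i `<=` X j then sgn (X i) * sgn (X j) else 0).
Definition vv : 'rV[rat]_n := \row_i (- sgn (X i)).

Lemma ZMu : Zm *m Mu = 1%:M.
Proof.
apply/matrixP => i j; rewrite !mxE.
rewrite (eq_bigr (fun k => if (X i `<=` X k) && (X k `<=` X j)
                          then sgn (X k) * sgn (X j) else 0)); last first.
  by move=> k _; rewrite !mxE; case: (X i `<=` X k); case: (X k `<=` X j);
     rewrite ?mul1r ?mul0r.
rewrite -big_mkcond /= (sumX (fun z => (X i `<=` z) && (z `<=` X j))
                          (fun z => sgn z * sgn (X j))).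
case: (boolP (X i `<=` X j)) => Hij; last first.
  rewrite big1_fset; last first.
    by move=> z _ /andP [a b]; case/negP: Hij; exact: fsubset_trans a b.
  case: (eqVneq i j) => [Eij|//]; by rewrite Eij fsubset_refl in Hij.
rewrite -mulr_suml.
rewrite (@eq_fbigl_cond _ _ _ _ _ (fpowerset (X j)) _ (fun z => X i `<=` z)); last first.
  move=> z; rewrite !inE /= fpowersetE.
  apply/idP/idP; first by case/andP => _ /andP [-> ->].
  case/andP => zj iz; rewrite zj iz !andbT.
  have [xn0 _] := HK (XK i); have [_ cj] := HK (XK j).
  have zn0 : z != fset0.
    by apply: contra xn0 => /eqP z0; rewrite -fsubset0 -z0.
  exact: (cj z zj zn0).
rewrite (alt_sum (leqnn _) Hij).
case: (eqVneq i j) => [<-|Nij].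
  by rewrite eqxx /sgn -exprMn mulN1r opprK expr1n.
have -> : (X i == X j) = false.
  by apply/negP => /eqP /X_inj E; rewrite E eqxx in Nij.
by rewrite mul0r.
Qed.

Lemma vZ : vv *m Zm = const_mx 1.
Proof.
apply/matrixP => i j; rewrite !mxE.
rewrite (eq_bigr (fun k => if X k `<=` X j then - sgn (X k) else 0)); last first.
  by move=> k _; rewrite !mxE; case: (X k `<=` X j); rewrite ?mulr1 ?mulr0.
by rewrite -big_mkcond /= (sumX (fun z => z `<=` X j) (fun z => - sgn z)) sub_sum // XK.
Qed.

Lemma M_fact : face_poset_matrix K = (const_mx 1 *m vv - 1%:M) *m Zm.
Proof.
rewrite mulmxBl mul1mx -mulmxA vZ.
apply/matrixP => i j; rewrite !mxE big_ord1 !mxE mulr1.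
by rewrite /X; case: (_ `<=` _).
Qed.

Lemma rank_fp : \rank (face_poset_matrix K) = (n - (chi K == 1%R))%N.
Proof.
rewrite M_fact mxrankMfree; last by rewrite row_free_unit; case: (mulmx1_unit ZMu).
rewrite rank_rank1; congr (_ - (_ == _))%N.
rewrite !mxE /chi -(sumX predT (fun x => - sgn x)).
by apply: eq_bigr => k _; rewrite !mxE mulr1.
Qed.

Lemma rankbar_chi : rankbar K = (chi K == 1).
Proof.
rewrite /rankbar rank_fp.
case: (boolP (chi K == 1)) => /= H; last by rewrite subn0 subnn.
have : (0 < n)%N.
  case: (posnP n) => // n0; move: H.
  have E : enum_fset K = [::] by apply/size0nil.
  by rewrite /chi E big_nil eq_sym oner_eq0.
move=> n0; rewrite subKn //.
Qed.
End Mat.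

Lemma chi_collapse K K' : elem_collapse K K' -> chi K = chi K'.
Proof.
case=> _ [s [t [[sK tK ts cst _] ->]]].
have tns : t != s by apply: contraTneq ts => ->; rewrite fproperEneq eqxx.
have tKs : t \in K `\ s by rewrite !inE tns.
have E1 : chi K = - sgn s + \sum_(x <- K `\ s) - sgn x := big_fsetD1 _ sK.
have E2 : \sum_(x <- K `\ s) - sgn x = - sgn t + \sum_(x <- K `\ s `\ t) - sgn x :=
  big_fsetD1 _ tKs.
have E3 : K `\ s `\ t = K `\` [fset s; t].
  apply/fsetP => x; rewrite !inE; by case: (x == s); case: (x == t); rewrite ?andbF.
rewrite E1 E2 E3 addrA /chi.
have -> : - sgn s + - sgn t = 0 by rewrite /sgn cst exprS mulN1r opprK subrr.
by rewrite add0r.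
Qed.

Lemma chi_iso K L : simp_iso K L -> chi K = chi L.
Proof.
case=> f [finj ->].
rewrite /chi big_imfset /=; last first.
  move=> x y _ _ /fsetP E; apply/fsetP => v.
  by move: (E (f v)); rewrite !(mem_imfset _ _ finj).
apply: eq_bigr => x _; congr (- _); rewrite /sgn card_imfset //.
Qed.

Lemma chi_rst K K' : clos_refl_sym_trans _ elem_collapse K K' -> chi K = chi K'.
Proof.
elim=> [x y /chi_collapse //|x //|x y _ -> //|x y z _ -> _ -> //].
Qed.

Theorem mainTheorem10 (K L : {fset {fset nat}}) :
  simplicial_complex K -> simplicial_complex L ->
  same_simple_homotopy_type K L ->
  rankbar K = rankbar L.
Proof.
move=> HK HL [K' [HKK' HK'L]].
by rewrite (rankbar_chi HK) (rankbar_chi HL) (chi_rst HKK') (chi_iso HK'L).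
Qed.
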